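(* Let $n\ge 2$, $N=\{1,\dots,n\}$, for each $i\in N$ let $A_i$ be a nonempty finite set, $A=\prod_{i\in N}A_i$, and let $u_i:A\to\mathbb{R}$ for $i\in N$. Then: (1) for any $\delta,\delta'$ with $0<\delta<\delta'\le 1$ and any $T\in\mathbb{N}$, $F(\delta',T)\subseteq F(\delta,T)$; (2) for any $\delta\in(0,1]$ and any $T\in\mathbb{N}$, $F(\delta,T)\subseteq F(\delta,T+1)$.
   Context: For $\delta\in(0,1]$, $T\in\mathbb{N}$ and $a^{[nT]}=(a^1,\dots,a^{nT})\in A^{nT}$, extend indices periodically by $a^s=a^{s-nT}$ for $s\ge nT+1$, and define for $i\in N$ $$U_i(a^{[nT]})=\frac{1}{\sum_{k=1}^{nT}\delta^{k-1}}\sum_{k=1}^{nT}\delta^{k-1}u_i\big(a^{(i-1)T+k}\big),$$ $U(a^{[nT]})=(U_i(a^{[nT]}))_{i\in N}$, and $F(\delta,T)=\operatorname{co}\left(\bigcup_{a^{[nT]}\in A^{nT}}\{U(a^{[nT]})\}\right)\subseteq\mathbb{R}^n$, where $\operatorname{co}$ denotes convex hull. *)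

(* Defs.v *)
From HB Require Import structures.
From mathcomp Require Import all_boot all_order all_algebra.
From mathcomp Require Import reals.
Set Implicit Arguments. Unset Strict Implicit. Unset Printing Implicit Defensive.
Import Order.TTheory GRing.Theory Num.Theory.
Local Open Scope ring_scope.

Lemma ord_pos (m : nat) (k : 'I_m) : (0 < m)%N.
Proof. exact: leq_ltn_trans (leq0n k) (ltn_ord k). Qed.

(* Periodic indexing: the 0-based position j taken modulo m
   (a^s = a^{s-m} for s > m, in 1-based notation). *)
Definition per_idx (m : nat) (k : 'I_m) (j : nat) : 'I_m :=
  Ordinal (ltn_pmod j (ord_pos k)).

Definition conv_hull (R : realType) (n : nat) (S : 'rV[R]_n -> Prop)
  (x : 'rV[R]_n) : Prop :=
  exists (m : nat) (w : 'I_m -> R) (p : 'I_m -> 'rV[R]_n),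
    [/\ (forall j, 0 <= w j), \sum_j w j = 1, (forall j, S (p j))
      & x = \sum_j w j *: p j].

(* Players are 'I_n (player i+1 of the paper is i : 'I_n); action profiles are
   dependent functions [forall i, Ai i]; a sequence a^{[nT]} is a function
   'I_(n*T) -> profile (position k0 : 'I_(n*T) is the paper's index k0+1).
   U_i(a) = (sum_{k<nT} delta^k u_i(a^{(i T + k) mod nT})) / sum_{k<nT} delta^k
   (0-based, equivalent to the paper's 1-based formula). *)
Definition U (R : realType) (n T : nat) (Ai : 'I_n -> finType)
  (u : 'I_n -> (forall i, Ai i) -> R) (delta : R)
  (a : 'I_(n * T) -> forall i, Ai i) : 'rV[R]_n :=
  \row_i ((\sum_(k < n * T) delta ^+ k * u i (a (per_idx k (i * T + k)%N)))
          / (\sum_(k < n * T) delta ^+ k)).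

Definition F (R : realType) (n : nat) (Ai : 'I_n -> finType)
  (u : 'I_n -> (forall i, Ai i) -> R) (delta : R) (T : nat) : 'rV[R]_n -> Prop :=
  conv_hull (fun x => exists a : 'I_(n * T) -> forall i, Ai i, x = U u delta a).

(* Main.v *)
Require Import Defs.
From HB Require Import structures.
From mathcomp Require Import all_boot all_order all_algebra.
From mathcomp Require Import reals.
From mathcomp Require Import boolp lra zify ring.
Import Order.TTheory GRing.Theory Num.Theory.
Local Open Scope ring_scope.
Set Implicit Arguments. Unset Strict Implicit. Unset Printing Implicit Defensive.
Lemma geomB (R : realType) (x : R) k : (1 - x) * \sum_(i < k) x ^+ i = 1 - x ^+ k.
Proof. by rewrite -opprB -[1 - x ^+ k]opprB subrX1 mulNr. Qed.

Lemma recB (R : realType) (x : R) (m : nat) (g : nat -> R) j :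
  (0 < m)%N -> (forall j, g (j + m)%N = g j) ->
  \sum_(k < m) x ^+ k * g (j + k)%N - x * \sum_(k < m) x ^+ k * g (j.+1 + k)%N
  = (1 - x ^+ m) * g j.
Proof.
case: m => // M _ gp.
rewrite -(big_mkord xpredT (fun k => x ^+ k * g (j + k)%N)) -(big_mkord xpredT (fun k => x ^+ k * g (j.+1 + k)%N)).
rewrite big_nat_recl // big_nat_recr //= expr0 mul1r addn0 mulrDr big_distrr /=.
have -> : (j.+1 + M = j + M.+1)%N by rewrite addSnnS.
rewrite gp.
rewrite (eq_bigr (fun i => x * (x ^+ i * g (j.+1 + i)%N))); last first.
  by move=> i _; rewrite addSnnS exprS mulrA.
rewrite mulrA -exprS. 
set s := \sum_(0 <= i < M) _.
lra.
Qed.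

Lemma shift_inv (R : realType) (m : nat) (g : nat -> R) c :
  (0 < m)%N -> (forall j, g (j + m)%N = g j) ->
  \sum_(k < m) g (c + k)%N = \sum_(k < m) g k.
Proof.
move=> m0 gp.
have E j : \sum_(k < m) g (j + k)%N = \sum_(k < m) g (j.+1 + k)%N.
  have := recB 1 j m0 gp.
  rewrite expr1n subrr mul0r mul1r.
  under eq_bigr do rewrite expr1n mul1r.
  under [X in _ - X = _]eq_bigr do rewrite expr1n mul1r.
  by move/eqP; rewrite subr_eq0 => /eqP.
elim: c => [|c IH]; first by apply: eq_bigr => k _; rewrite add0n.
by rewrite -E.
Qed.

Definition muf (R : realType) (x : R) (h : nat -> R) (m j : nat) : R :=
  if j is j'.+1 then h j - x * h j' else h 0%N - x * h m.-1.

Lemma sumLA (R : realType) (x : R) (m : nat) (f h : nat -> R) :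
  (0 < m)%N -> (forall j, f (j + m)%N = f j) ->
  \sum_(j < m) h j * ((1 - x ^+ m) * f j) =
  \sum_(j < m) muf x h m j * \sum_(k < m) x ^+ k * f (j + k)%N.
Proof.
move=> m0 fp.
set V := fun j => \sum_(k < m) x ^+ k * f (j + k)%N.
have Vm : V m = V 0%N.
  by rewrite /V; apply: eq_bigr => k _; rewrite add0n addnC fp.
rewrite (eq_bigr (fun j : 'I_m => h j * V j - x * (h j * V j.+1))); last first.
  move=> j _; rewrite -(recB x j m0 fp) -/(V j) -/(V j.+1); lra.
rewrite sumrB -big_distrr /=.
rewrite -(big_mkord xpredT (fun j => h j * V j)).
rewrite -(big_mkord xpredT (fun j => h j * V j.+1)).
rewrite -(big_mkord xpredT (fun j => muf x h m j * V j)).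
clearbody V. case: m m0 V Vm fp => // M _ V /= Vm _.
rewrite big_nat_recl // big_nat_recr //= big_nat_recl //= Vm.
rewrite [X in _ = _ + X](eq_bigr (fun i => h i.+1 * V i.+1 - x * (h i * V i.+1))); last first.
  by move=> i _; rewrite /muf mulrBl mulrA.
rewrite sumrB -big_distrr /= /muf.
set A := \sum_(0 <= i < M) _. set B := \sum_(0 <= i < M) _.
lra.
Qed.

Lemma blocks (R : realType) (n p : nat) (F : nat -> R) :
  \sum_(k < n * p) F k = \sum_(q < n) \sum_(s < p) F (q * p + s)%N.
Proof.
elim: n => [|n IH]; first by rewrite mul0n !big_ord0.
rewrite mulSnr big_split_ord /= IH big_ord_recr /=.
by congr (_ + _); apply: eq_bigr => s _.
Qed.

Lemma shiftT (R : realType) (T r : nat) (h G : nat -> R) :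
  (forall j, G (j + (T + r))%N = G j) ->
  \sum_(j < T + r) h j * G (j + T)%N =
  \sum_(j < T) h (j + r)%N * G j + \sum_(j < r) h j * G (T + j)%N.
Proof.
move=> Gp.
have -> : (T + r = r + T)%N by rewrite addnC.
rewrite big_split_ord /= addrC; congr (_ + _).
  apply: eq_bigr => j _; rewrite addnC; congr (_ * _).
  by rewrite -[in RHS](Gp j); congr G; lia.
by apply: eq_bigr => j _; rewrite addnC.
Qed.

Definition cc (R : realType) (d : R) (T m e : nat) : R :=
  if (e < T)%N then d ^+ e * \sum_(i < m.+1) d ^+ i else d ^+ e.
Definition Wf (R : realType) (d : R) (n T : nat) (f : nat -> R) (e : nat) : R :=
  \sum_(q < n) (d ^+ T.+1) ^+ q * f (e + q * T)%N.

Lemma ident2 (R : realType) (d : R) (n T : nat) (f : nat -> R) :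
  d != 1 -> (0 < n)%N -> (0 < T)%N -> (forall j, f (j + n * T)%N = f j) ->
  \sum_(e < n * T) cc d T (n * T) e * Wf d n T f e =
  (\sum_(i < n * T.+1) d ^+ i) * \sum_(j < n * T) d ^+ j * f j.
Proof.
move=> d1 n0 T0 fp.
have d1' : 1 - d != 0 by rewrite subr_eq0 eq_sym.
apply: (mulfI d1').
set y := d ^+ T.+1.
have rec j : (1 - y ^+ n) * f j = Wf d n T f j - y * Wf d n T f (j + T)%N.
  have := @recB R y n (fun q => f (j + q * T)%N) 0%N n0.
  rewrite mul0n addn0 => <-; last by move=> q; rewrite mulnDl addnA fp.
  congr (_ - _ * _); apply: eq_bigr => k _.
  by rewrite mulnDl mul1n addnA.
have Wp j : Wf d n T f (j + n * T)%N = Wf d n T f j.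
  by apply: eq_bigr => q _; rewrite addnAC fp.
rewrite [in RHS]mulrA geomB (mulnC n T.+1) exprM -/y [in RHS]big_distrr /=.
under [X in _ = X]eq_bigr do rewrite mulrCA rec.
set r := (n * T - T)%N.
have mE : (n * T = T + r)%N by rewrite subnKC // leq_pmull.
move: Wp; rewrite /cc; rewrite mE => Wp.
rewrite [X in _ = X](eq_bigr (fun j : 'I_(T + r) => d ^+ j * Wf d n T f j - y * (d ^+ j * Wf d n T f (j + T)%N))); last first.
  by move=> j _; rewrite mulrBr mulrCA.
rewrite sumrB -big_distrr /= shiftT // [in RHS]big_split_ord /= big_split_ord /=.
have E1 : (1 - d) * \sum_(i < T) (if (i < T)%N then d ^+ i * \sum_(i0 < (T + r).+1) d ^+ i0 else d ^+ i) * Wf d n T f i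
  = \sum_(i < T) d ^+ i * Wf d n T f i - y * \sum_(j < T) d ^+ (j + r) * Wf d n T f j.
  rewrite !big_distrr -sumrB /=; apply: eq_bigr => i _; rewrite ltn_ord.
  have G := geomB d (T + r).+1.
  have H : y * d ^+ (i + r) = d ^+ i * (1 - (1 - d) * \sum_(i0 < (T + r).+1) d ^+ i0).
    by rewrite G opprB addrC subrK /y -!exprD; congr (_ ^+ _); lia.
  rewrite mulrA H; ring.
have E2 : (1 - d) * \sum_(i < r) (if (T + i < T)%N then d ^+ (T + i) * \sum_(i0 < (T + r).+1) d ^+ i0 else d ^+ (T + i)) * Wf d n T f (T + i)
  = \sum_(i < r) d ^+ (T + i) * Wf d n T f (T + i) - y * \sum_(j < r) d ^+ j * Wf d n T f (T + j).
  rewrite !big_distrr -sumrB /=; apply: eq_bigr => i _.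
  have -> : (T + i < T)%N = false by rewrite ltnNge leq_addr.
  have H : y * d ^+ i = d * d ^+ (T + i) by rewrite /y -exprS -exprD addSn.
  rewrite mulrA H; ring.
rewrite mulrDr E1 E2 /=.
lra.
Qed.

Definition ext (P : Type) (m : nat) (mpos : (0 < m)%N) (a : 'I_m -> P) (j : nat) : P :=
  a (Ordinal (ltn_pmod j mpos)).

Lemma ext_mod P m (mpos : (0 < m)%N) (a : 'I_m -> P) j : ext mpos a (j %% m) = ext mpos a j.
Proof. by rewrite /ext; congr a; apply: val_inj => /=; rewrite modn_mod. Qed.

Lemma ext_addm P m (mpos : (0 < m)%N) (a : 'I_m -> P) j : ext mpos a (j + m) = ext mpos a j.
Proof. by rewrite -ext_mod modnDr ext_mod. Qed.

Lemma ext_ord P m (mpos : (0 < m)%N) (a : 'I_m -> P) (k : 'I_m) : ext mpos a k = a k.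
Proof. by rewrite /ext; congr a; apply: val_inj => /=; rewrite modn_small. Qed.

Lemma per_ext P m (mpos : (0 < m)%N) (a : 'I_m -> P) (k : 'I_m) j :
  a (per_idx k j) = ext mpos a j.
Proof. by rewrite /ext /per_idx; congr a; apply: val_inj. Qed.

Lemma U_eval (R : realType) n T (Ai : 'I_n -> finType) (u : 'I_n -> (forall i, Ai i) -> R)
  d (a : 'I_(n * T) -> forall i, Ai i) (mpos : (0 < n * T)%N) i :
  U u d a 0 i = (\sum_(k < n * T) d ^+ k * u i (ext mpos a (i * T + k)%N)) / \sum_(k < n * T) d ^+ k.
Proof.
rewrite /U mxE; congr (_ / _); apply: eq_bigr => k _; by rewrite (per_ext mpos).
Qed.

Lemma Ub1 (R : realType) n T (Ai : 'I_n -> finType) (u : 'I_n -> (forall i, Ai i) -> R)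
  d (a : 'I_(n * T) -> forall i, Ai i) (mpos : (0 < n * T)%N) i (r : nat) :
  U u d (fun p : 'I_(n * T) => ext mpos a (p + r)%N) 0 i =
  (\sum_(k < n * T) d ^+ k * u i (ext mpos a (i * T + (r + k))%N)) / \sum_(k < n * T) d ^+ k.
Proof.
rewrite (U_eval _ _ _ mpos); congr (_ / _); apply: eq_bigr => k _.
rewrite {1}/ext /= -ext_mod modnDml ext_mod; do 3 f_equal; lia.
Qed.

Lemma Ub2 (R : realType) n T (Ai : 'I_n -> finType) (u : 'I_n -> (forall i, Ai i) -> R)
  d (a : 'I_(n * T) -> forall i, Ai i) (mpos : (0 < n * T)%N) (mpos' : (0 < n * T.+1)%N) i (e : nat) :
  U u d (fun p : 'I_(n * T.+1) => ext mpos a (e + (p %/ T.+1) * T)%N) 0 i =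
  (\sum_(s < T.+1) d ^+ s) * Wf d n T (fun j => u i (ext mpos a (i * T + j)%N)) e
   / \sum_(k < n * T.+1) d ^+ k.
Proof.
rewrite (U_eval _ _ _ mpos'); congr (_ / _).
rewrite (eq_bigr (fun k : 'I_(n * T.+1) => d ^+ k * u i (ext mpos a (i * T + (e + (k %/ T.+1) * T))%N))); last first.
  move=> k _; rewrite {1}/ext /= -modn_divl divnMDl //.
  rewrite muln_modl -ext_mod modnDmr ext_mod.
  by rewrite mulnDl addnCA.
rewrite (blocks n T.+1 (fun k => d ^+ k * u i (ext mpos a (i * T + (e + (k %/ T.+1) * T))%N))).
rewrite /Wf mulr_sumr; apply: eq_bigr => q _.
rewrite mulrC mulr_sumr; apply: eq_bigr => s _.
rewrite (divnMDl _ _ (ltn0Sn T)) divn_small // addn0.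
by rewrite exprD mulnC exprM mulrAC.
Qed.

Lemma hull_fin (R : realType) n (S : 'rV[R]_n -> Prop) (I : finType) (w : I -> R) (p : I -> 'rV[R]_n) :
  (forall i, 0 <= w i) -> \sum_i w i = 1 -> (forall i, S (p i)) ->
  conv_hull S (\sum_i w i *: p i).
Proof.
move=> w0 w1 Sp.
have E (F : I -> 'rV[R]_n) : \sum_i F i = \sum_(j < #|I|) F (enum_val j).
  exact: (reindex _ (onW_bij _ (enum_val_bij I))).
have E' (F : I -> R) : \sum_i F i = \sum_(j < #|I|) F (enum_val j).
  exact: (reindex _ (onW_bij _ (enum_val_bij I))).
exists #|I|, (fun j => w (enum_val j)), (fun j => p (enum_val j)); split => //.
by rewrite -E'.
Qed.

Lemma hull_bind (R : realType) n (S S' : 'rV[R]_n -> Prop) k :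
  (forall y, S y -> exists (lam : 'I_k -> R) (q : 'I_k -> 'rV[R]_n),
      [/\ (forall r, 0 <= lam r), \sum_r lam r = 1, (forall r, S' (q r))
        & y = \sum_r lam r *: q r]) ->
  forall x, conv_hull S x -> conv_hull S' x.
Proof.
move=> H x [m [w [p [w0 w1 Sp ->]]]].
have H' : forall j : 'I_m, exists lq : ('I_k -> R) * ('I_k -> 'rV[R]_n),
   [/\ (forall r, 0 <= lq.1 r), \sum_r lq.1 r = 1, (forall r, S' (lq.2 r))
        & p j = \sum_r lq.1 r *: lq.2 r].
  move=> j; have [lam [q Hq]] := H _ (Sp j); by exists (lam, q).
have [g Hg] := choice H'.
have -> : \sum_j w j *: p j = \sum_(jr : 'I_m * 'I_k) (w jr.1 * (g jr.1).1 jr.2) *: (g jr.1).2 jr.2.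
  rewrite -(pair_big xpredT xpredT (fun j r => (w j * (g j).1 r) *: (g j).2 r)) /=.
  apply: eq_bigr => j _; have [_ _ _ ->] := Hg j.
  by rewrite scaler_sumr; apply: eq_bigr => r _; rewrite scalerA.
apply: hull_fin.
- by move=> [j r] /=; have [h0 _ _ _] := Hg j; apply: mulr_ge0.
- rewrite -(pair_big xpredT xpredT (fun j r => (w j * (g j).1 r))) /= -w1.
  by apply: eq_bigr => j _; have [_ h1 _ _] := Hg j; rewrite -big_distrr /= h1 mulr1.
- by move=> [j r] /=; have [_ _ h2 _] := Hg j.
Qed.

Lemma geom_pos (R : realType) (x : R) k : 0 < x -> (0 < k)%N -> 0 < \sum_(i < k) x ^+ i.
Proof.
move=> x0; case: k => // k _; rewrite big_ord_recl expr0.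
have : 0 <= \sum_(i < k) x ^+ (lift ord0 i) by apply: sumr_ge0 => i _; apply: exprn_ge0; lra.
lra.
Qed.

Lemma part1_a (R : realType) n T (Ai : 'I_n -> finType) (u : 'I_n -> (forall i, Ai i) -> R)
  (d d' : R) (mpos : (0 < n * T)%N) (a : 'I_(n * T) -> forall i, Ai i) :
  0 < d -> d < d' -> d' <= 1 ->
  exists (lam : 'I_(n * T) -> R) (q : 'I_(n * T) -> 'rV[R]_n),
    [/\ (forall r, 0 <= lam r), \sum_r lam r = 1,
        (forall r, exists b : 'I_(n * T) -> forall i, Ai i, q r = U u d b)
      & U u d' a = \sum_r lam r *: q r].
Proof.
move=> d0 dd' d'1.
set m := (n * T)%N.
set h := fun j : nat => d' ^+ j.
set mu := muf d h m.
set G := \sum_(k < m) d ^+ k.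
set H := \sum_(k < m) d' ^+ k.
have G0 : 0 < G by apply: geom_pos.
have H0 : 0 < H by apply: geom_pos => //; lra.
have d1 : d < 1 by lra.
have dm : d ^+ m < 1 by rewrite exprn_ilt1 ?ltW // -lt0n.
have key (f : nat -> R) : (forall j, f (j + m)%N = f j) ->
  \sum_(j < m) mu j * (\sum_(k < m) d ^+ k * f (j + k)%N) = (1 - d ^+ m) * \sum_(j < m) h j * f j.
  move=> fp; rewrite -sumLA // big_distrr /=; apply: eq_bigr => j _; ring.
have MG : (\sum_(j < m) mu j) * G = (1 - d ^+ m) * H.
  have E := key (fun _ => 1) (fun _ => erefl).
  have L : \sum_(j < m) mu j * G = \sum_(j < m) mu j * (\sum_(k < m) d ^+ k * 1).
    by apply: eq_bigr => j _; congr (_ * _); apply: eq_bigr => k _; rewrite mulr1.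
  have Rr : (1 - d ^+ m) * H = (1 - d ^+ m) * \sum_(j < m) h j * 1.
    by congr (_ * _); apply: eq_bigr => j _; rewrite mulr1.
  by rewrite big_distrl /= L E Rr.
set M := \sum_(j < m) mu j in MG.
have M0 : 0 < M.
  have : 0 < M * G by rewrite MG; apply: mulr_gt0; lra.
  by rewrite pmulr_lgt0.
have mu0 j : 0 <= mu j.
  rewrite /mu /muf /h; case: j => [|j].
    have h1 : d' ^+ m.-1 <= 1 by apply: exprn_ile1; lra.
    have h2 : 0 <= d' ^+ m.-1 by apply: exprn_ge0; lra.
    rewrite expr0; nra.
  rewrite exprS -mulrBl; apply: mulr_ge0; first lra.
  by apply: exprn_ge0; lra.
exists (fun r => mu r / M), (fun r : 'I_m => U u d (fun p : 'I_m => ext mpos a (p + r)%N)).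
split.
- by move=> r; apply: divr_ge0 => //; lra.
- by rewrite -mulr_suml -/M mulfV //; lra.
- by move=> r; eexists.
apply/rowP => i; rewrite summxE (U_eval _ _ _ mpos).
under [X in _ = X]eq_bigr do rewrite mxE Ub1.
set f := fun j => u i (ext mpos a (i * T + j)%N).
have fp : forall j, f (j + m)%N = f j by move=> j; rewrite /f addnA ext_addm.
have -> : \sum_(r < m) mu r / M * ((\sum_(k < m) d ^+ k * u i (ext mpos a (i * T + (r + k))%N)) / G)
   = (\sum_(r < m) mu r * (\sum_(k < m) d ^+ k * f (r + k)%N)) / (M * G).
  rewrite mulr_suml; apply: eq_bigr => r _; rewrite /f.
  by field; apply/andP; split; lra.
rewrite key // MG /h.
rewrite /f -/m -/H; field; apply/andP; split; lra.
Qed.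

Lemma sum1n (R : realType) m : \sum_(k < m) (1 : R) ^+ k = m%:R.
Proof. by under eq_bigr do rewrite expr1n; rewrite sumr_const card_ord. Qed.

Lemma part2_a (R : realType) n T (Ai : 'I_n -> finType) (u : 'I_n -> (forall i, Ai i) -> R)
  (d : R) (mpos : (0 < n * T)%N) (mpos' : (0 < n * T.+1)%N) (n0 : (0 < n)%N) (T0 : (0 < T)%N)
  (a : 'I_(n * T) -> forall i, Ai i) :
  0 < d -> d <= 1 ->
  exists (lam : 'I_(n * T) -> R) (q : 'I_(n * T) -> 'rV[R]_n),
    [/\ (forall r, 0 <= lam r), \sum_r lam r = 1,
        (forall r, exists b : 'I_(n * T.+1) -> forall i, Ai i, q r = U u d b)
      & U u d a = \sum_r lam r *: q r].
Proof.
move=> d0 d1.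
set m := (n * T)%N.
have m0 : (m%:R : R) != 0 by rewrite pnatr_eq0 -lt0n.
have [-> | dn1] := eqVneq d 1.
  exists (fun _ => 1 / m%:R), (fun e : 'I_m => U u 1 (fun _ : 'I_(n * T.+1) => a e)).
  split.
  - by move=> _; apply: divr_ge0; [lra | apply: ler0n].
  - by rewrite sumr_const card_ord -mulr_natr; field.
  - by move=> r; eexists.
  apply/rowP => i; rewrite summxE (U_eval _ _ _ mpos).
  under [X in _ = X]eq_bigr do rewrite mxE (U_eval _ _ _ mpos').
  rewrite !sum1n.
  rewrite (eq_bigr (fun k : 'I_(n * T) => u i (ext mpos a (i * T + k)%N))); last by move=> k _; rewrite expr1n mul1r.
  rewrite (@shift_inv _ (n * T) (fun k => u i (ext mpos a k)) (i * T)) //; last first.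
    by move=> j; rewrite ext_addm.
  rewrite (eq_bigr (fun k : 'I_(n * T) => u i (a k))); last by move=> k _; rewrite ext_ord.
  rewrite mulr_suml; apply: eq_bigr => e _.
  under eq_bigr do rewrite expr1n mul1r /ext.
  rewrite sumr_const card_ord -mulr_natr.
  have : ((n * T.+1)%:R : R) != 0 by rewrite pnatr_eq0 -lt0n.
  by move=> m1; field; rewrite nat1r !pnatr_eq0 -!lt0n n0 T0.
have dlt1 : d < 1 by rewrite lt_neqAle dn1 d1.
set S1 := \sum_(s < T.+1) d ^+ s.
set Sm := \sum_(k < m) d ^+ k.
set Sm' := \sum_(k < n * T.+1) d ^+ k.
have S10 : 0 < S1 by apply: geom_pos.
have Sm0 : 0 < Sm by apply: geom_pos.
have Sm'0 : 0 < Sm' by apply: geom_pos.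
set y := d ^+ T.+1.
set Y := \sum_(q < n) y ^+ q.
have Y0 : 0 < Y by apply: geom_pos => //; apply: exprn_gt0.
have SmY : Sm' = S1 * Y.
  rewrite /Sm' (blocks n T.+1 (fun k => d ^+ k)) /Y mulrC big_distrl /=.
  apply: eq_bigr => q _; rewrite big_distrr /=; apply: eq_bigr => s _.
  by rewrite exprD mulnC exprM.
have cc0 e : 0 <= cc d T m e.
  rewrite /cc; case: ifP => _; last by apply: exprn_ge0; lra.
  by apply: mulr_ge0; [apply: exprn_ge0; lra | apply: sumr_ge0 => k _; apply: exprn_ge0; lra].
have Scc : \sum_(e < m) cc d T m e = S1 * Sm.
  have E := @ident2 R d n T (fun _ => 1) dn1 n0 T0 (fun _ => erefl).
  have WY : forall e, Wf d n T (fun _ => 1) e = Y.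
    by move=> e; apply: eq_bigr => q _; rewrite mulr1.
  have L : \sum_(e < n * T) cc d T (n * T) e * Wf d n T (fun _ => 1) e = (\sum_(e < m) cc d T m e) * Y.
    by rewrite big_distrl; apply: eq_bigr => e _; rewrite WY.
  have Rr : \sum_(j < n * T) d ^+ j * 1 = Sm by apply: eq_bigr => j _; rewrite mulr1.
  rewrite L Rr -/Sm' SmY in E.
  apply: (mulIf (lt0r_neq0 Y0)); rewrite E; ring.
exists (fun e => cc d T m e / (S1 * Sm)),
  (fun e : 'I_m => U u d (fun p : 'I_(n * T.+1) => ext mpos a (e + (p %/ T.+1) * T)%N)).
split.
- by move=> r; apply: divr_ge0 => //; apply: mulr_ge0; lra.
- by rewrite -mulr_suml Scc mulfV //; apply: lt0r_neq0; apply: mulr_gt0.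
- by move=> r; eexists.
apply/rowP => i; rewrite summxE (U_eval _ _ _ mpos).
under [X in _ = X]eq_bigr do rewrite mxE (Ub2 _ _ _ mpos mpos').
set f := fun j => u i (ext mpos a (i * T + j)%N).
have fp : forall j, f (j + n * T)%N = f j by move=> j; rewrite /f addnA ext_addm.
have -> : \sum_(r < m) cc d T m r / (S1 * Sm) * (S1 * Wf d n T f r / Sm')
   = (\sum_(r < m) cc d T m r * Wf d n T f r) / (Sm * Sm').
  rewrite [in RHS]mulr_suml; apply: eq_bigr => r _.
  by field; rewrite ?(lt0r_neq0 S10) ?(lt0r_neq0 Sm0) ?(lt0r_neq0 Sm'0).
rewrite ident2 // -/Sm' -/m -/Sm.
by rewrite /f; field; rewrite ?(lt0r_neq0 Sm0) ?(lt0r_neq0 Sm'0).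
Qed.

Unset Implicit Arguments.

Theorem theorem2 (R : realType) (n : nat) (hn : (2 <= n)%N)
  (Ai : 'I_n -> finType) (hne : forall i, (0 < #|Ai i|)%N)
  (u : 'I_n -> (forall i, Ai i) -> R) :
  (forall (delta delta' : R) (T : nat), 0 < delta -> delta < delta' ->
     delta' <= 1 -> (1 <= T)%N ->
     forall x, F u delta' T x -> F u delta T x) /\
  (forall (delta : R) (T : nat), 0 < delta -> delta <= 1 -> (1 <= T)%N ->
     forall x, F u delta T x -> F u delta T.+1 x).
Proof.
have n0 : (0 < n)%N by apply: leq_trans hn.
split.
- move=> d d' T d0 dd' d'1 T1 x.
  have mpos : (0 < n * T)%N by rewrite muln_gt0 n0.
  apply: hull_bind => y [a ->].
  have [lam [q [h0 h1 h2 h3]]] := part1_a u mpos a d0 dd' d'1.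
  by exists lam, q; split.
- move=> d T d0 d1 T1 x.
  have mpos : (0 < n * T)%N by rewrite muln_gt0 n0.
  have mpos' : (0 < n * T.+1)%N by rewrite muln_gt0 n0.
  apply: hull_bind => y [a ->].
  have [lam [q [h0 h1 h2 h3]]] := part2_a u mpos mpos' n0 T1 a d0 d1.
  by exists lam, q; split.
Qed.
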